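(* Pareto-RR restricted to instances with a single place ($m=1$) and no lower quotas is solvable in polynomial time.
   Context: An instance of Refugee Resettlement (RR) consists of a set $F$ of families, a set $P=\{p_1,\dots,p_m\}$ of places, a set $S$ of $t$ services, a requirement vector $\boldsymbol{r}_i\in\mathbb{N}^t$ for each family, and lower and upper quota vectors $\underline{\boldsymbol{c}}_j,\bar{\boldsymbol{c}}_j\in\mathbb{N}^t$ for each place. An assignment is $\sigma\colon F\to P\cup\{\bot\}$ ($\bot$ = unassigned); the load of $p_j$ is $\sum_{f_i:\sigma(f_i)=p_j}\boldsymbol{r}_i$; $\sigma$ is feasible if $\underline{\boldsymbol{c}}_j\le$ load $\le\bar{\boldsymbol{c}}_j$ coordinatewise for all $p_j$. No lower quotas: all $\underline{\boldsymbol{c}}_j$ zero. Pareto-RR: each family has a weak order $\succeq_i$ over the places it finds acceptable, preferring each acceptable place to $\bot$; an assignment is acceptable if every family is unassigned or at an acceptable place; a feasible acceptable $\sigma$ is Pareto-optimal if no feasible acceptable $\sigma'$ satisfies $\sigma'(f_i)\succeq_i\sigma(f_i)$ for all families with strict preference for some family. Task: find a feasible acceptable Pareto-optimal assignment or report that none exists. *)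

(* Defs.v *)
From mathcomp Require Import all_boot.

Set Implicit Arguments.
Unset Strict Implicit.
Unset Printing Implicit Defensive.

(* An instance with n families ('I_n), m places ('I_m), t services ('I_t). *)
Record instance (n m t : nat) := Instance {
  req  : 'I_n -> 'I_t -> nat;
  lq   : 'I_m -> 'I_t -> nat;
  uq   : 'I_m -> 'I_t -> nat;
  acc  : 'I_n -> 'I_m -> bool;
  pref : 'I_n -> 'I_m -> 'I_m -> bool  (* pref i p q : p  >=_i  q          *)
}.

Definition weak_order_prefs n m t (I : instance n m t) : Prop :=
  forall i : 'I_n,
    (forall p q, acc I i p -> acc I i q -> pref I i p q || pref I i q p) /\
    (forall p q r, acc I i p -> acc I i q -> acc I i r ->
        pref I i p q -> pref I i q r -> pref I i p r).

Definition no_lower_quotas n m t (I : instance n m t) : Prop :=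
  forall (j : 'I_m) (s : 'I_t), lq I j s = 0.

(* assignments: None stands for bottom (unassigned) *)
Definition assignment n m := 'I_n -> option 'I_m.

Definition load n m t (I : instance n m t) (sg : assignment n m)
    (j : 'I_m) (s : 'I_t) : nat :=
  \sum_(i : 'I_n | sg i == Some j) req I i s.

Definition feasible n m t (I : instance n m t) (sg : assignment n m) : Prop :=
  forall (j : 'I_m) (s : 'I_t), lq I j s <= load I sg j s <= uq I j s.

Definition acceptable n m t (I : instance n m t) (sg : assignment n m) : Prop :=
  forall (i : 'I_n) (j : 'I_m), sg i = Some j -> acc I i j.

Definition wpref n m t (I : instance n m t) (i : 'I_n) (a b : option 'I_m) : bool :=
  match a, b with
  | Some p, Some q => pref I i p q
  | Some p, None => acc I i p
  | None, None => true
  | None, Some _ => false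
  end.

Definition spref n m t (I : instance n m t) (i : 'I_n) (a b : option 'I_m) : bool :=
  wpref I i a b && ~~ wpref I i b a.

Definition pareto_optimal n m t (I : instance n m t) (sg : assignment n m) : Prop :=
  feasible I sg /\ acceptable I sg /\
  ~ (exists sg' : assignment n m,
        [/\ feasible I sg', acceptable I sg',
            (forall i, wpref I i (sg' i) (sg i)) &
            exists i, spref I i (sg' i) (sg i)]).

(* Machine model: unit-cost RAM with constants, addition, truncated       *)
(* subtraction, indirect addressing and conditional jumps (polynomially   *)
(* equivalent to Turing machines).                                        *)

Inductive instr :=
  | IConst of nat & nat
  | IAdd of nat & nat & nat
  | ISub of nat & nat & nat
  | ILoad of nat & nat
  | IStore of nat & nat
  | IJz of nat & nat
  | IHalt.

Definition program := seq instr.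

Record state := State { pc : nat; regs : nat -> nat; mem : nat -> nat }.

Definition upd (f : nat -> nat) (x v : nat) : nat -> nat :=
  fun y => if y == x then v else f y.

(* one step; None when the machine has halted (IHalt or pc out of range) *)
Definition step (p : program) (st : state) : option state :=
  let R := regs st in let M := mem st in let k := pc st in
  match nth IHalt p k with
  | IConst r c => Some (State k.+1 (upd R r c) M)
  | IAdd r a b => Some (State k.+1 (upd R r (R a + R b)) M)
  | ISub r a b => Some (State k.+1 (upd R r (R a - R b)) M)
  | ILoad r a => Some (State k.+1 (upd R r (M (R a))) M)
  | IStore a b => Some (State k.+1 R (upd M (R a) (R b)))
  | IJz r l => Some (State (if R r == 0 then l else k.+1) R M)
  | IHalt => None
  end.

Fixpoint exec (p : program) (k : nat) (st : state) : option state :=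
  match k with
  | 0 => Some st
  | k'.+1 => match step p st with
             | Some st' => exec p k' st'
             | None => None
             end
  end.

Definition init_state (s : seq nat) : state :=
  State 0 (fun _ => 0) (fun x => if x is x'.+1 then nth 0 s x' else size s).

Definition output (st : state) : seq nat :=
  mkseq (fun i => mem st i.+1) (mem st 0).

Definition halts_in (p : program) (s : seq nat) (k : nat) (out : seq nat) : Prop :=
  exists st, [/\ exec p k (init_state s) = Some st, step p st = None
               & output st = out].

(* binary size of an input list *)
Definition enc_size (s : seq nat) : nat := \sum_(x <- s) (trunc_log 2 x).+1.

(* With a single place p_1 (= ord0 : 'I_1), lower quotas zero and the weak
   order on the acceptable set {p_1} (or the empty set) being trivial, an
   instance is given by t, n, the upper quota of p_1, and, for each family,
   the acceptability bit and the requirement vector. *)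
Definition encode1 n t (I : instance n 1 t) : seq nat :=
  [:: t; n] ++ [seq uq I ord0 s | s <- enum 'I_t] ++
  flatten [seq nat_of_bool (acc I i ord0) :: [seq req I i s | s <- enum 'I_t]
          | i <- enum 'I_n].

(* answer: 0 :: _  (or empty)  = "no feasible acceptable Pareto-optimal
   assignment exists";  c :: bits with c <> 0 = the assignment sending f_i
   to p_1 iff the i-th bit is nonzero *)
Definition decode1 n (out : seq nat) : option (assignment n 1) :=
  match out with
  | c.+1 :: bits => Some (fun i : 'I_n => if nth 0 bits i != 0 then Some ord0 else None)
  | _ => None
  end.

Definition correct_answer n t (I : instance n 1 t) (out : seq nat) : Prop :=
  match decode1 n out with
  | Some sg => pareto_optimal I sg
  | None => ~ exists sg : assignment n 1, pareto_optimal I sg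
  end.

(* Main.v *)
Require Import Defs.
From mathcomp Require Import all_boot.
From mathcomp Require Import zify.


Definition P : program := [::
 IConst 6 1; ILoad 1 6; IConst 7 2; ILoad 2 7; ILoad 3 0; IAdd 3 3 6;
 IConst 8 3; IAdd 9 3 0; IAdd 10 1 0;
 (* 9 *) IJz 10 16; ILoad 11 8; IStore 9 11; IAdd 8 8 6; IAdd 9 9 6; ISub 10 10 6; IJz 0 9;
 (* 16 *) IConst 12 2; IAdd 13 2 0;
 (* 18 *) IJz 13 53; ILoad 14 8; IStore 12 0; IJz 14 48;
 (* 22 *) IAdd 9 8 6; IAdd 15 3 0; IAdd 10 1 0;
 (* 25 *) IJz 10 35; ILoad 11 9; ILoad 16 15; ISub 11 11 16; IJz 11 31; IJz 0 48;
 (* 31 *) IAdd 9 9 6; IAdd 15 15 6; ISub 10 10 6; IJz 0 25;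
 (* 35 *) IAdd 9 8 6; IAdd 15 3 0; IAdd 10 1 0;
 (* 38 *) IJz 10 47; ILoad 11 9; ILoad 16 15; ISub 16 16 11; IStore 15 16;
          IAdd 9 9 6; IAdd 15 15 6; ISub 10 10 6; IJz 0 38;
 (* 47 *) IStore 12 6;
 (* 48 *) IAdd 8 8 1; IAdd 8 8 6; IAdd 12 12 6; ISub 13 13 6; IJz 0 18;
 (* 53 *) IStore 6 6; IAdd 17 2 6; IStore 0 17; IHalt].

Definition reaches (st : state) (Q : nat -> state -> Prop) :=
  exists k st', exec P k st = Some st' /\ Q k st'.

Lemma r_step st st1 Q : step P st = Some st1 ->
  reaches st1 (fun k s => Q k.+1 s) -> reaches st Q.
Proof. move=> H [k [s [E HQ]]]; exists k.+1, s; by rewrite /= H. Qed.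

Lemma r_done st Q : Q 0 st -> reaches st Q.
Proof. by exists 0, st. Qed.

Lemma exec_add a b st : exec P (a + b) st = obind (exec P b) (exec P a st).
Proof.
elim: a st => [|a IH] st //=. by case: (step P st).
Qed.

Lemma r_seq st Q1 Q : reaches st Q1 ->
  (forall k s, Q1 k s -> reaches s (fun k' s' => Q (k + k') s')) -> reaches st Q.
Proof.
move=> [k [s [E H1]]] H; have [k' [s' [E' H2]]] := H _ _ H1.
exists (k + k'), s'; by rewrite exec_add E /=.
Qed.

Ltac stp := apply: r_step; [reflexivity | cbn [pc regs Defs.mem]].

Fixpoint chk (M : nat -> nat) q d c : bool :=
  if c is c'.+1 then (M q <= M d) && chk M q.+1 d.+1 c' else true.

Lemma chk_loop c : forall R M q d, R 10 = c -> R 9 = q -> R 15 = d -> R 0 = 0 -> R 6 = 1 ->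
 reaches (State 25 R M) (fun k st => [/\ k <= 10*c+6, Defs.mem st = M,
    (forall x, x \notin [:: 9;10;11;15;16] -> regs st x = R x) &
    pc st = if chk M q d c then 35 else 48]).
Proof.
elim: c => [|c IH] R M q d h10 h9 h15 h0 h6.
  apply: r_step; first by rewrite /step /= h10.
  by apply: r_done; split.
apply: r_step; first by rewrite /step /= h10.
stp. stp. stp. 
apply: r_step; first by rewrite /step /=.
rewrite /upd /= h9 h15.
case: (boolP (M q - M d == 0)) => Hle /=.
- stp. stp. stp.
  apply: r_step; first by rewrite /step /= /upd /= h0.
  apply: r_seq.
    apply: (IH _ M q.+1 d.+1) => /=; rewrite /upd /= ?h10 ?h9 ?h15 ?h0 ?h6; lia.
  move=> k s [Hk Hm Hr Hp]; apply: r_done; split.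
  + lia.
  + done.
  + move=> x Hx; rewrite Hr //. move: Hx. rewrite /upd !inE. by do ![case: eqP => //].
  + rewrite Hp /=. have -> : M q <= M d by lia. done.
- apply: r_step; first by rewrite /step /= /upd /= h0.
  apply: r_done; split => //=.
  + lia.
  + move=> x. rewrite /upd !inE. by do ![case: eqP => //].
  + by move: Hle; rewrite -[M q - M d == 0]/(M q <= M d) => /negbTE ->.
Qed.


Fixpoint subm (M : nat -> nat) q d c : nat -> nat :=
  if c is c'.+1 then subm (upd M d (M d - M q)) q.+1 d.+1 c' else M.

Lemma sub_loop c : forall R M q d, R 10 = c -> R 9 = q -> R 15 = d -> R 0 = 0 -> R 6 = 1 ->
 reaches (State 38 R M) (fun k st => [/\ k <= 9*c+1, Defs.mem st = subm M q d c,
    (forall x, x \notin [:: 9;10;11;15;16] -> regs st x = R x) &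
    pc st = 47]).
Proof.
elim: c => [|c IH] R M q d h10 h9 h15 h0 h6.
  apply: r_step; first by rewrite /step /= h10 /=.
  by apply: r_done; split => //; move=> x; rewrite /upd.
apply: r_step; first by rewrite /step /= h10 /=.
do 7 stp.
apply: r_step; first by rewrite /step /= /upd /= h0.
apply: r_seq.
  apply: (IH _ _ q.+1 d.+1) => /=; rewrite /upd /= ?h10 ?h9 ?h15 ?h0 ?h6; lia.
move=> k s [Hk Hm Hr Hp]; apply: r_done; split => //.
+ lia.
+ by rewrite Hm /= h9 h15.
+ move=> x Hx; rewrite Hr //. move: Hx. rewrite /upd !inE. by do ![case: eqP => //].
Qed.

Fixpoint copym (M : nat -> nat) q d c : nat -> nat :=
  if c is c'.+1 then copym (upd M d (M q)) q.+1 d.+1 c' else M.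

Lemma copy_loop c : forall R M q d, R 10 = c -> R 8 = q -> R 9 = d -> R 0 = 0 -> R 6 = 1 ->
 reaches (State 9 R M) (fun k st => [/\ k <= 7*c+1, Defs.mem st = copym M q d c,
    (forall x, x \notin [:: 8;9;10;11] -> regs st x = R x), regs st 8 = q + c &
    pc st = 16]).
Proof.
elim: c => [|c IH] R M q d h10 h9 h15 h0 h6.
  apply: r_step; first by rewrite /step /= h10 /=.
  apply: r_done; split => //; rewrite ?addn0 //; move=> x; rewrite /upd //.
apply: r_step; first by rewrite /step /= h10 /=.
do 5 stp.
apply: r_step; first by rewrite /step /= /upd /= h0.
apply: r_seq.
  apply: (IH _ _ q.+1 d.+1) => /=; rewrite /upd /= ?h10 ?h9 ?h15 ?h0 ?h6; lia.
move=> k s [Hk Hm Hr H8 Hp]; apply: r_done; split => //.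
+ lia.
+ by rewrite Hm /= h9 h15.
+ move=> x Hx; rewrite Hr //. move: Hx. rewrite /upd !inE. by do ![case: eqP => //].
+ rewrite H8; lia.
Qed.


Definition Bf t i := 3 + t + i * t.+1.
Definition Uf (M0 : nat -> nat) s := M0 (3 + s).
Definition Af (M0 : nat -> nat) t i := M0 (Bf t i).
Definition Rf (M0 : nat -> nat) t i s := M0 ((Bf t i).+1 + s).

Definition fit M0 t (g : nat -> nat) i :=
  (Af M0 t i != 0) && all (fun s => g s + Rf M0 t i s <= Uf M0 s) (iota 0 t).

Fixpoint gl M0 t i : nat -> nat :=
  if i is i'.+1 then (fun s => gl M0 t i' s + (if fit M0 t (gl M0 t i') i' then Rf M0 t i' s else 0))
  else (fun _ => 0).

Definition gbit M0 t i := fit M0 t (gl M0 t i) i.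

Lemma gl_le M0 t i s : s < t -> gl M0 t i s <= Uf M0 s.
Proof.
move=> st; elim: i => [|i IH] //=.
case E: (fit _ _ _ _); last by rewrite addn0.
move: E => /andP [_ /allP]; apply; by rewrite mem_iota.
Qed.

Lemma Bf_mono t i j : i < j -> (Bf t i).+1 + t <= Bf t j.
Proof. rewrite /Bf => h. nia. Qed.

Lemma subm_spec c : forall M q d x, q + c <= d ->
  subm M q d c x = if (d <= x) && (x < d + c) then M x - M (q + (x - d)) else M x.
Proof.
elim: c => [|c IH] M q d x h /=.
  have -> : (d <= x) && (x < d + 0) = false by lia. done.
rewrite IH; last by lia.
rewrite /upd.
have [->|ne] := eqVneq x d.
- have -> : (d.+1 <= d) = false by lia.
  have -> : (d <= d) && (d < d + c.+1) by lia. by rewrite subnn addn0.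
- case: ifP => h1.
  + have -> : (d <= x) && (x < d + c.+1) by lia.
    case: eqP => e; first lia. congr (_ - M _); lia.
  + have -> : (d <= x) && (x < d + c.+1) = false by lia. done.
Qed.

Lemma copym_spec c : forall M q d x, q + c <= d ->
  copym M q d c x = if (d <= x) && (x < d + c) then M (q + (x - d)) else M x.
Proof.
elim: c => [|c IH] M q d x h /=.
  have -> : (d <= x) && (x < d + 0) = false by lia. done.
rewrite IH; last by lia.
rewrite /upd.
have [->|ne] := eqVneq x d.
- have -> : (d.+1 <= d) = false by lia.
  have -> : (d <= d) && (d < d + c.+1) by lia. by rewrite subnn addn0.
- case: ifP => h1.
  + have -> : (d <= x) && (x < d + c.+1) by lia.
    case: eqP => e; first lia. congr (M _); lia.
  + have -> : (d <= x) && (x < d + c.+1) = false by lia. done.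
Qed.

Lemma chk_all c : forall M q d, chk M q d c = all (fun j => M (q+j) <= M (d+j)) (iota 0 c).
Proof.
elim: c => [|c IH] M q d //=.
rewrite IH !addn0 -[1]/(1 + 0) iotaDl all_map; congr (_ && _).
by apply: eq_all => j /=; rewrite !addnA !addn1.
Qed.

Definition Inv M0 t H i (M : nat -> nat) :=
  [/\ forall x, Bf t i <= x -> x < H -> M x = M0 x,
      forall s, s < t -> M (H + s) = Uf M0 s - gl M0 t i s
    & forall j, j < i -> M j.+2 = gbit M0 t j].

Lemma inv_A M0 t H n i M : Inv M0 t H i M -> i < n -> H = Bf t n -> M (Bf t i) = Af M0 t i.
Proof. move=> [h1 _ _] hi hH; apply: h1 => //. rewrite hH; have := @Bf_mono t _ _ hi; lia. Qed.

Lemma inv_skip M0 t H n i M : Inv M0 t H i M -> i < n -> H = Bf t n -> gbit M0 t i = false ->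
  Inv M0 t H i.+1 (upd M i.+2 0).
Proof.
move=> [h1 h2 h3] hi hH hg; split.
- move=> x hx1 hx2; rewrite /upd; case: eqP => [e|_]; first by move: hx1; rewrite /Bf; lia.
  apply: h1 => //; move: hx1; rewrite /Bf; lia.
- move=> s hs; rewrite /upd; case: eqP => [e|_].
    have := @Bf_mono t _ _ hi; rewrite -hH /Bf; lia.
  rewrite h2 //= -/(gbit M0 t i) hg addn0 //.
- move=> j hj; rewrite /upd; case: eqP => [[->]|ne]; first by rewrite hg.
  apply: h3; have : j <> i by move=> e; apply: ne; rewrite e. lia.
Qed.

Lemma inv_take M0 t H n i M : Inv M0 t H i M -> i < n -> H = Bf t n -> gbit M0 t i = true ->
  Inv M0 t H i.+1 (upd (subm (upd M i.+2 0) (Bf t i).+1 H t) i.+2 1).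
Proof.
move=> [h1 h2 h3] hi hH hg.
have hB := @Bf_mono t _ _ hi. have hBH : (Bf t i).+1 + t <= H by rewrite hH.
split.
- move=> x hx1 hx2; rewrite /upd; case: eqP => [e|_]; first by move: hx1; rewrite /Bf; lia.
  rewrite subm_spec //.
  have -> : (H <= x) && (x < H + t) = false by lia.
  case: eqP => [e|_]; first by move: hx1; rewrite /Bf; lia.
  apply: h1 => //; move: hx1; rewrite /Bf; lia.
- move=> s hs; rewrite /upd; case: eqP => [e|_].
    move: hB; rewrite -hH /Bf; lia.
  rewrite subm_spec //.
  have -> : (H <= H + s) && (H + s < H + t) by lia.
  case: eqP => [e|_]; first by move: hB; rewrite -hH /Bf; lia.
  case: eqP => [e|_]; first by move: e; rewrite /Bf; lia.
  rewrite ?add0n in hs *. rewrite h2 // h1; [|lia|lia].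
  rewrite /= -/(gbit M0 t i) hg -subnDA; congr (_ - (_ + _)).
  rewrite /Rf; congr M0; lia.
- move=> j hj; rewrite /upd; case: eqP => [[->]|ne]; first by rewrite hg.
  rewrite subm_spec //.
  have -> : (H <= j.+2) && (j.+2 < H + t) = false.
    move: hBH; rewrite /Bf; nia.
  case: eqP => [e|_]; first by move: e => [e]; exfalso; apply: ne; rewrite e.
  apply: h3; have : j <> i by move=> e; apply: ne; rewrite e. lia.
Qed.

Lemma fit_chk M0 t H n i M : Inv M0 t H i M -> i < n -> H = Bf t n -> Af M0 t i != 0 ->
  chk (upd M i.+2 0) (Bf t i).+1 H t = gbit M0 t i.
Proof.
move=> [h1 h2 h3] hi hH hA.
have hB := @Bf_mono t _ _ hi. have hBH : (Bf t i).+1 + t <= H by rewrite hH.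
rewrite chk_all /gbit /fit hA /=; apply: eq_in_all => s; rewrite mem_iota => /andP [_ hs].
rewrite /upd.
case: eqP => [e|_]; first by move: e; rewrite /Bf; lia.
case: eqP => [e|_]; first by move: e hBH; rewrite /Bf; nia.
rewrite ?add0n in hs *. rewrite h2 // h1; [|lia|lia].
have := @gl_le M0 t i s hs. rewrite /Rf. lia.
Qed.


Lemma mem8 (P : nat -> Prop) : P 0 -> P 1 -> P 2 -> P 3 -> P 6 -> P 8 -> P 12 -> P 13 ->
  forall x, x \in [:: 0;1;2;3;6;8;12;13] -> P x.
Proof.
move=> ? ? ? ? ? ? ? ? x; rewrite !inE; by do ![case/orP => [/eqP -> //|]]; move/eqP => ->.
Qed.

Lemma fam_loop M0 t n H : H = Bf t n -> forall c i R M, i + c = n ->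
  R 0 = 0 -> R 6 = 1 -> R 1 = t -> R 3 = H -> R 8 = Bf t i -> R 12 = i.+2 -> R 13 = c ->
  Inv M0 t H i M ->
  reaches (State 18 R M) (fun k st => [/\ k <= c * (25 * t.+1) + 1, pc st = 53,
     (forall x, x \in [:: 0; 2; 6] -> regs st x = R x) & Inv M0 t H n (Defs.mem st)]).
Proof.
move=> hH; elim=> [|c IH] i R M hic h0 h6 h1 h3 h8 h12 h13 hI.
  apply: r_step; first by rewrite /step /= h13 /=.
  apply: r_done; split => //. by rewrite addn0 in hic; rewrite -hic.
have hi : i < n by lia.
have skip : forall R' M', (forall x, x \in [:: 0;1;2;3;6;8;12;13] -> R' x = R x) ->
   Inv M0 t H i.+1 M' ->
   reaches (State 48 R' M') (fun k st => [/\ k <= 6 + (c * (25 * t.+1) + 1), pc st = 53,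
     (forall x, x \in [:: 0; 2; 6] -> regs st x = R x) & Inv M0 t H n (Defs.mem st)]).
  move=> R' M' hR hI'.
  do 4 stp.
  apply: r_step; first by rewrite /step /= /upd /= hR ?h0.
  apply: r_seq.
    apply: (IH i.+1) => //=; rewrite /upd /= ?hR //= ?h0 ?h6 ?h1 ?h3 ?h8 ?h12 ?h13 //; try lia.
    rewrite /Bf; lia.
  move=> k s [Hk Hp Hr HI]; apply: r_done; split => //.
  + lia.
  + move=> x hx; rewrite Hr //; rewrite /upd; move: hx; rewrite !inE.
    by case/or3P => /eqP -> /=; rewrite hR.
have hA := @inv_A _ _ _ _ _ _ hI hi hH.
apply: r_step; first by rewrite /step /= h13 /=.
stp. stp.
apply: r_step; first by rewrite /step /= /upd /= h8 h12 /=.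
rewrite hA h0.
case: (boolP (Af M0 t i == 0)) => hA0 /=.
  have hg : gbit M0 t i = false by rewrite /gbit /fit hA0.
  apply: r_seq.
    apply: skip; last by exact: (@inv_skip _ _ _ _ _ _ hI) hi hH hg.
    apply: mem8; by [].
  move=> k s [Hk Hp Hr HI]; apply: r_done; split => //. lia.
do 3 stp.
apply: r_seq.
  apply: (@chk_loop t _ _ (Bf t i).+1 H) => /=; rewrite /upd /= ?h0 ?h6 ?h1 ?h3 ?h8 ?h12 ?h13 //; lia.
move=> k s [Hk Hm Hr Hp].
rewrite (@fit_chk _ _ _ n _ _ hI hi hH hA0) in Hp.
case: s Hm Hr Hp => pc1 R1 M1 /= Hm Hr Hp; subst pc1 M1.
have e0 : R1 0 = 0 by rewrite Hr // /upd /= h0.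
have e1 : R1 1 = t by rewrite Hr // /upd /= h1.
have e2 : R1 2 = R 2 by rewrite Hr // /upd /=.
have e3 : R1 3 = H by rewrite Hr // /upd /= h3.
have e6 : R1 6 = 1 by rewrite Hr // /upd /= h6.
have e8 : R1 8 = Bf t i by rewrite Hr // /upd /= h8.
have e12 : R1 12 = i.+2 by rewrite Hr // /upd /= h12.
have e13 : R1 13 = c.+1 by rewrite Hr // /upd /= h13.
case Eg: (gbit M0 t i) => /=.
- do 3 stp.
  apply: r_seq.
    apply: (@sub_loop t _ _ (Bf t i).+1 H) => /=; rewrite /upd /= ?e0 ?e6 ?e1 ?e3 ?e8 ?e12 ?e13 //; lia.
  move=> k' s [Hk' Hm' Hr' Hp'].
  case: s Hm' Hr' Hp' => pc2 R2 M2 /= Hm' Hr' Hp'; subst pc2 M2.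
  have f0 : R2 0 = R 0 by rewrite Hr' // /upd /= e0.
  have f1 : R2 1 = R 1 by rewrite Hr' // /upd /= e1.
  have f2 : R2 2 = R 2 by rewrite Hr' // /upd /= e2.
  have f3 : R2 3 = R 3 by rewrite Hr' // /upd /= e3.
  have f6 : R2 6 = R 6 by rewrite Hr' // /upd /= e6.
  have f8 : R2 8 = R 8 by rewrite Hr' // /upd /= e8.
  have f12 : R2 12 = R 12 by rewrite Hr' // /upd /= e12.
  have f13 : R2 13 = R 13 by rewrite Hr' // /upd /= e13.
  apply: r_step; first by rewrite /step /=.
  apply: r_seq.
    apply: skip; last first.
      rewrite f12 f6 h12 h6. exact: (@inv_take _ _ _ _ _ _ hI) hi hH Eg.
    apply: mem8; by rewrite /upd /= ?f0 ?f1 ?f2 ?f3 ?f6 ?f8 ?f12 ?f13.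
  move=> k2 s [Hk2 Hp2 Hr2 HI2]; apply: r_done; split => //. lia.
- apply: r_seq.
    apply: skip; last by exact: (@inv_skip _ _ _ _ _ _ hI) hi hH Eg.
    apply: mem8; by rewrite /= ?e0 ?e1 ?e2 ?e3 ?e6 ?e8 ?e12 ?e13.
  move=> k2 s [Hk2 Hp2 Hr2 HI2]; apply: r_done; split => //. lia.
Qed.


Definition M0of (s : seq nat) : nat -> nat := Defs.mem (init_state s).

Lemma run_main s t n : nth 0 s 0 = t -> nth 0 s 1 = n -> (size s).+1 = Bf t n ->
 reaches (init_state s) (fun k st => [/\ step P st = None,
    k <= 20 + 7 * t + n * (25 * t.+1)
  & output st = 1 :: mkseq (fun j => nat_of_bool (gbit (M0of s) t j)) n]).
Proof.
move=> ht hn hL.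
rewrite /init_state.
do 9 stp.
rewrite /= ht hn.
apply: r_seq.
  apply: (@copy_loop t _ _ 3 (size s).+1) => /=; rewrite /upd /= ?addn1 ?addn0 //.
move=> k st [Hk Hm Hr H8 Hp].
case: st Hm Hr H8 Hp => pc1 R1 M1 /= Hm Hr H8 Hp; subst pc1 M1.
have e0 : R1 0 = 0 by rewrite Hr.
have e1 : R1 1 = t by rewrite Hr.
have e2 : R1 2 = n by rewrite Hr.
have e3 : R1 3 = (size s).+1 by rewrite Hr // /upd /= addn1.
have e6 : R1 6 = 1 by rewrite Hr.
do 2 stp.
have hL2 : 3 + t <= (size s).+1 by rewrite hL /Bf; lia.
have hB0 : Bf t 0 = 3 + t by rewrite /Bf mul0n addn0.
apply: r_seq.
  apply: (@fam_loop (M0of s) t n (size s).+1 hL n 0) => //=; rewrite /upd /= ?e0 ?e1 ?e2 ?e3 ?e6 ?H8 ?hB0 ?add0n ?addn0 //.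
  split.
  - move=> x hx1 hx2; rewrite copym_spec; last lia.
    have -> : ((size s).+1 <= x) && (x < (size s).+1 + t) = false by lia. done.
  - move=> j hj; rewrite copym_spec; last lia.
    have -> : ((size s).+1 <= (size s).+1 + j) && ((size s).+1 + j < (size s).+1 + t) by lia.
    by rewrite /Uf subn0 /M0of /=; congr nth; lia.
  - by [].
move=> k2 st [Hk2 Hp2 Hr2 HI]; case: st Hp2 Hr2 HI => pc2 R2 M2 /= Hp2 Hr2 HI; subst pc2.
have f0 : R2 0 = 0 by rewrite Hr2 // /upd /= e0.
have f2 : R2 2 = n by rewrite Hr2 // /upd /= e2.
have f6 : R2 6 = 1 by rewrite Hr2 // /upd /= e6.
do 3 stp.
apply: r_done; split.
- by rewrite /step /=.
- lia.
- rewrite /output /= /upd /= f0 f2 f6 /=.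
  apply: (@eq_from_nth _ 0); first by rewrite /= !size_mkseq addn1.
  move=> [|j]; rewrite size_mkseq => hj; first by rewrite nth_mkseq.
  rewrite nth_mkseq //= nth_mkseq; last lia.
  have hjn : j < n by lia.
  case: HI => _ _ h3. rewrite h3 //.
Qed.


Lemma gl_sum M0 t k s : gl M0 t k s = \sum_(i < k | gbit M0 t i) Rf M0 t i s.
Proof.
elim: k => [|k IH]; first by rewrite big_ord0.
rewrite [RHS]big_mkcond big_ord_recr /= -big_mkcond -IH. by [].
Qed.

Lemma pareto_greedy n t (I : instance n 1 t) (M0 : nat -> nat) (sg : assignment n 1) :
  weak_order_prefs I -> no_lower_quotas I ->
  (forall j : 'I_t, Uf M0 j = uq I ord0 j) ->
  (forall i : 'I_n, Af M0 t i = acc I i ord0) ->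
  (forall (i : 'I_n) (j : 'I_t), Rf M0 t i j = req I i j) ->
  (forall i : 'I_n, sg i = if gbit M0 t i then Some ord0 else None) ->
  pareto_optimal I sg.
Proof.
move=> hw hlq hU hA hR hsg.
have loadE : forall j : 'I_t, load I sg ord0 j = gl M0 t n j.
  move=> j; rewrite gl_sum /load.
  rewrite (eq_bigl (fun i : 'I_n => gbit M0 t i)); last first.
    by move=> i; rewrite hsg; case: (gbit M0 t i).
  by apply: eq_bigr => i _; rewrite hR.
split.
  move=> j s; rewrite (ord1 j) hlq /= loadE -hU; exact: gl_le.
split.
  move=> i j; rewrite hsg; case: ifP => // hg [<-].
  move: hg; rewrite /gbit /fit hA => /andP [h _]; by case: (acc I i ord0) h.
move=> [sg' [hf' ha' hw' [i0 hs0]]].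
have key : forall i : 'I_n, gbit M0 t i -> sg' i = Some ord0.
  move=> i hg; have := hw' i; rewrite hsg hg.
  by case: (sg' i) => [p|] //; rewrite (ord1 p).
move: hs0; rewrite hsg; case Eg: (gbit M0 t i0).
  by rewrite key //= /spref /= andbN.
case E': (sg' i0) => [p|]; last by rewrite /spref /=.
rewrite (ord1 p) in E' * => _.
have hacc := ha' _ _ E'.
move: Eg; rewrite /gbit /fit hA hacc /= => /negbT /allPn [s hs hns].
rewrite mem_iota add0n in hs; move: hs => /andP [_ hs].
set s' : 'I_t := Ordinal hs.
have := hf' ord0 s'; rewrite /= => /andP [_ hle].
suff : gl M0 t i0 s + Rf M0 t i0 s <= load I sg' ord0 s'.
  move: hns; rewrite -[s]/(nat_of_ord s') hU. lia.
rewrite gl_sum (@big_ord_widen_cond _ _ _ i0 n (gbit M0 t) (fun i => Rf M0 t i s)); last exact: ltnW.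
have e1 : Rf M0 t i0 s = \sum_(i < n | i == i0) Rf M0 t i s by rewrite big_pred1_eq.
rewrite e1.
rewrite /load [X in X + _ <= _]big_mkcond [X in _ + X <= _]big_mkcond [X in _ <= X]big_mkcond -big_split /=; apply: leq_sum => i _.
case: (eqVneq i i0) => [->|ne].
  by rewrite ltnn andbF E' eqxx /= -[s]/(nat_of_ord s') hR.
rewrite addn0. case: (boolP (gbit M0 t i)) => //= hg.
case: ifP => // _; rewrite key // -[s]/(nat_of_ord s') hR. by rewrite eqxx.
Qed.


Lemma size_flat_map (T : Type) (l : seq T) (f : T -> seq nat) b :
  (forall x, size (f x) = b) -> size (flatten (map f l)) = size l * b.
Proof. move=> hf; elim: l => [|a l IH] //=; by rewrite size_cat hf IH mulSn. Qed.

Lemma nth_flat_map (T : Type) (l : seq T) (f : T -> seq nat) b x0 i k :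
  (forall x, size (f x) = b) -> i < size l -> k < b ->
  nth 0 (flatten (map f l)) (i * b + k) = nth 0 (f (nth x0 l i)) k.
Proof.
move=> hf; elim: l i => [|a l IH] [|i] //= hi hk.
  by rewrite nth_cat hf hk.
rewrite nth_cat hf mulSn -addnA ltnNge leq_addr /= addKn IH //.
Qed.

Lemma enc_facts n t (I : instance n 1 t) :
  let s := encode1 I in
  [/\ nth 0 s 0 = t, nth 0 s 1 = n, (size s).+1 = Bf t n &
     [/\ (forall j : 'I_t, Uf (M0of s) j = uq I ord0 j),
      (forall i : 'I_n, Af (M0of s) t i = acc I i ord0) &
      (forall (i : 'I_n) (j : 'I_t), Rf (M0of s) t i j = req I i j)]].
Proof.
have hb : forall i : 'I_n, size ((fun i => nat_of_bool (acc I i ord0) :: [seq req I i s | s <- enum 'I_t]) i) = t.+1.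
  by move=> i; rewrite /= size_map size_enum_ord.
split => //; last split.
- rewrite /encode1 /= size_cat size_map size_enum_ord (@size_flat_map _ _ _ _ hb) size_enum_ord /Bf; lia.
- move=> j; rewrite /Uf /M0of /= /encode1 /=.
  rewrite nth_cat size_map size_enum_ord ?add0n ltn_ord (nth_map j) ?size_enum_ord ?add0n //.
  by rewrite nth_ord_enum.
- move=> i; rewrite /Af /M0of.
  have -> : Bf t i = (2 + t + (i * t.+1 + 0)).+1 by rewrite /Bf; lia.
  rewrite /= /encode1 /= nth_cat size_map size_enum_ord.
  have -> : t + (i * t.+1 + 0) < t = false by lia.
  rewrite addKn (@nth_flat_map _ _ _ _ i _ _ hb) ?size_enum_ord //.
  by rewrite nth_ord_enum.
- move=> i j; rewrite /Rf /M0of.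
  have -> : (Bf t i).+1 + j = (2 + t + (i * t.+1 + j.+1)).+1 by rewrite /Bf; lia.
  rewrite /= /encode1 /= nth_cat size_map size_enum_ord.
  have -> : t + (i * t.+1 + j.+1) < t = false by lia.
  rewrite addKn (@nth_flat_map _ _ _ _ i _ _ hb) ?size_enum_ord //.
  rewrite nth_ord_enum /= (nth_map j) ?size_enum_ord //.
  by rewrite nth_ord_enum.
by rewrite ltnS ltn_ord.
Qed.

Lemma enc_size_ge s : size s <= enc_size s.
Proof. rewrite /enc_size; elim: s => [|x s IH]; rewrite ?big_nil ?big_cons //=; lia. Qed.

Theorem proposition12 :
  exists (p : program) (c d : nat),
    forall (n t : nat) (I : instance n 1 t),
      weak_order_prefs I -> no_lower_quotas I ->
      exists (k : nat) (out : seq nat),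
        [/\ halts_in p (encode1 I) k out,
            k <= c * (enc_size (encode1 I)).+1 ^ d
          & correct_answer I out].
Proof.
exists P, 40, 1 => n t I hw hlq.
have [ht hn hL [hU hA hR]] := enc_facts _ _ I.
have [k [st [E [Hst Hk Ho]]]] := run_main _ _ _ ht hn hL.
exists k, (output st); split.
- by exists st.
- have := enc_size_ge (encode1 I). move: hL; rewrite /Bf expn1. nia.
- rewrite /correct_answer Ho /=.
  apply: (@pareto_greedy _ _ _ _ _ hw hlq hU hA hR) => i.
  rewrite nth_mkseq //. by case: (gbit _ _ _).
Qed.
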